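(* For every session type $S$ and every process $P$: if there exist a trace $t$ and a process $P'$ such that $\langle P ; [\![ S ]\!] \rangle \xRightarrow{t} \langle P' ; \mathsf{no}_P \rangle$, then the typing judgement $\emptyset\cdot\emptyset \vdash P : S$ is not derivable.
   Context: Values $v,u,w$ (including tuples), value variables $x,y,z$, process variables $X,Y$; $a$ ranges over values and value variables. Boolean predicates $A$ include $\mathsf{tt},\mathsf{ff}$, equalities/comparisons of values, conjunction, negation, and for each base type $\mathsf{B}$ a predicate $\mathsf{isValue}_{\mathsf{B}}(v)$ that evaluates to $\mathsf{tt}$ if $v$ is of type $\mathsf{B}$ and to $\mathsf{ff}$ otherwise; $A\Downarrow\mathsf{tt}$ / $A\Downarrow\mathsf{ff}$ denote evaluation. Predicates are type-checked by standard rules ($\Gamma\vdash A:\mathsf{Bool}$). Processes: $P,Q ::= \triangleleft \mathtt{l}(a).P \mid \triangleright\{\mathtt{l}_i(x_i).P_i\}_{i\in I} \mid \mu_X.P \mid X \mid \mathsf{if}\ A\ \mathsf{then}\ P\ \mathsf{else}\ Q \mid \mathbf{0}$, with guarded recursion; $x_i$ is bound in $P_i$, $X$ in $\mu_X.P$. Process transitions: $\mu_X.P \xrightarrow{\tau} P[\mu_X.P/X]$; $\triangleleft\mathtt{l}(v).P \xrightarrow{\triangleleft \mathtt{l}(v)} P$; $\triangleright\{\mathtt{l}_i(x_i).P_i\}_{i\in I} \xrightarrow{\triangleright \mathtt{l}_j(v)} P_j[v/x_j]$ for $j\in I$; $\mathsf{if}\ A\ \mathsf{then}\ P\ \mathsf{else}\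 Q \xrightarrow{\tau} P$ if $A\Downarrow\mathsf{tt}$ and $\xrightarrow{\tau} Q$ if $A\Downarrow\mathsf{ff}$. Base types $\mathsf{B} ::= \mathsf{Int}\mid\mathsf{Str}\mid\mathsf{Bool}\mid\dots\mid(\mathsf{B},\mathsf{B})$. Session types: $S ::= \oplus\{!\mathtt{l}_i(\mathsf{B}_i).S_i\}_{i\in I} \mid \&\{?\mathtt{l}_i(\mathsf{B}_i).S_i\}_{i\in I} \mid \mathsf{rec}\ X.S \mid X \mid \mathsf{end}$, with $I\neq\emptyset$, labels $\mathtt{l}_i$ pairwise distinct, guarded recursion; types are equi-recursive ($\mathsf{rec}\ X.S$ is identified with $S[\mathsf{rec}\ X.S/X]$). Typing uses $\Theta$ (partial map from process variables to session types) and $\Gamma$ (partial map from value variables to base types). $\Gamma\vdash x:\mathsf{B}$ if $\Gamma(x)=\mathsf{B}$; $\Gamma\vdash v:\mathsf{B}$ if $v\in\mathsf{B}$. Process rules: (tBra) if for all $i\in I$, $\Theta\cdot\Gamma,x_i:\mathsf{B}_i\vdash P_i:S_i$, then $\Theta\cdot\Gamma\vdash \triangleright\{\mathtt{l}_i(x_i).P_i\}_{i\in I\cup J} : \&\{?\mathtt{l}_i(\mathsf{B}_i).S_i\}_{i\in I}$; (tSel) if there is $i\in I$ with $\mathtt{l}=\mathtt{l}_i$, $\Gamma\vdash a:\mathsf{B}_i$ and $\Theta\cdot\Gamma\vdash P:S_i$, then $\Theta\cdot\Gamma\vdash \triangleleft\mathtt{l}(a).P : \oplus\{!\mathtt{l}_i(\mathsf{B}_i).S_i\}_{i\in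 I}$; (tRec) $\Theta,X:S\cdot\Gamma\vdash P:S$ implies $\Theta\cdot\Gamma\vdash\mu_X.P:S$; (tPVar) $\Theta(X)=S$ implies $\Theta\cdot\Gamma\vdash X:S$; (tIf) $\Gamma\vdash A:\mathsf{Bool}$, $\Theta\cdot\Gamma\vdash P:S$, $\Theta\cdot\Gamma\vdash Q:S$ imply $\Theta\cdot\Gamma\vdash \mathsf{if}\ A\ \mathsf{then}\ P\ \mathsf{else}\ Q:S$; (tNil) $\Theta\cdot\Gamma\vdash\mathbf{0}:\mathsf{end}$. Monitors: $M,N ::= \triangleleft\mathtt{l}(a).M \mid \triangleright\{\mathtt{l}_i(x_i).M_i\}_{i\in I} \mid \blacktriangle\mathtt{l}(a).M \mid \blacktriangledown\{\mathtt{l}_i(x_i).M_i\}_{i\in I} \mid \mu_X.M \mid X \mid \mathsf{if}\ A\ \mathsf{then}\ M\ \mathsf{else}\ N \mid \mathbf{0} \mid \mathsf{no}_P \mid \mathsf{no}_E$ ($\triangleleft,\triangleright$: send to / receive from the monitored process; $\blacktriangle,\blacktriangledown$: send to / receive from the environment). Monitor transitions: $\triangleleft\mathtt{l}(v).M\xrightarrow{\triangleleft\mathtt{l}(v)}M$; $\blacktriangle\mathtt{l}(v).M\xrightarrow{\blacktriangle\mathtt{l}(v)}M$; $\mu_X.M\xrightarrow{\tau}M[\mu_X.M/X]$; $\triangleright\{\mathtt{l}_i(x_i).M_i\}_{i\in I}\xrightarrow{\triangleright\mathtt{l}_j(v)}M_j[v/x_j]$ and $\blacktriangledown\{\mathtt{l}_i(x_i).M_i\}_{i\in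 I}\xrightarrow{\blacktriangledown\mathtt{l}_j(v)}M_j[v/x_j]$ for $j\in I$; conditionals as for processes; violations: $\triangleright\{\mathtt{l}_i(x_i).M_i\}_{i\in I}\xrightarrow{\triangleright\mathtt{l}(v)}\mathsf{no}_P$ and $\blacktriangledown\{\mathtt{l}_i(x_i).M_i\}_{i\in I}\xrightarrow{\blacktriangledown\mathtt{l}(v)}\mathsf{no}_E$ whenever $\mathtt{l}\neq\mathtt{l}_i$ for all $i\in I$. Composite system $\langle P;M\rangle$: if $P\xrightarrow{\triangleleft\mathtt{l}(v)}P'$ and $M\xrightarrow{\triangleright\mathtt{l}(v)}M'$ then $\langle P;M\rangle\xrightarrow{\tau}\langle P';M'\rangle$; if $P\xrightarrow{\triangleright\mathtt{l}(v)}P'$ and $M\xrightarrow{\triangleleft\mathtt{l}(v)}M'$ then $\langle P;M\rangle\xrightarrow{\tau}\langle P';M'\rangle$; if $M\xrightarrow{\alpha}M'$ with $\alpha\in\{\blacktriangle\mathtt{l}(v),\blacktriangledown\mathtt{l}(v)\}$ then $\langle P;M\rangle\xrightarrow{\alpha}\langle P;M'\rangle$; if $P\xrightarrow{\tau}P'$ then $\langle P;M\rangle\xrightarrow{\tau}\langle P';M\rangle$; if $M\xrightarrow{\tau}M'$ then $\langle P;M\rangle\xrightarrow{\tau}\langle P;M'\rangle$. A trace $t$ is a finite sequence of actions $\blacktriangle\mathtt{l}(v)$, $\blacktriangledown\mathtt{l}(v)$; $\xRightarrow{t}$ is a sequence of transitions whose visible labels are $t$, interleaved with finitely many $\tau$-transitions.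 Monitor synthesis $[\![-]\!]$: $[\![\oplus\{!\mathtt{l}_i(\mathsf{B}_i).S_i\}_{i\in I}]\!] = \triangleright\{\mathtt{l}_i(x_i).\,\mathsf{if}\ \mathsf{isValue}_{\mathsf{B}_i}(x_i)\ \mathsf{then}\ \blacktriangle\mathtt{l}_i(x_i).[\![S_i]\!]\ \mathsf{else}\ \mathsf{no}_P\}_{i\in I}$; $[\![\&\{?\mathtt{l}_i(\mathsf{B}_i).S_i\}_{i\in I}]\!] = \blacktriangledown\{\mathtt{l}_i(x_i).\,\mathsf{if}\ \mathsf{isValue}_{\mathsf{B}_i}(x_i)\ \mathsf{then}\ \triangleleft\mathtt{l}_i(x_i).[\![S_i]\!]\ \mathsf{else}\ \mathsf{no}_E\}_{i\in I}$; $[\![\mathsf{rec}\ X.S]\!]=\mu_X.[\![S]\!]$; $[\![X]\!]=X$; $[\![\mathsf{end}]\!]=\mathbf{0}$. *)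

(* Defs.v *)
From Stdlib Require Import List ZArith String Bool Arith Permutation.
Import ListNotations.

Definition label := nat.
Definition var := nat.

Inductive btype : Type :=
| BInt | BStr | BBool | BPair (B1 B2 : btype).

Inductive val : Type :=
| VInt (z : Z) | VStr (s : string) | VBool (b : bool) | VPair (v1 v2 : val).

Fixpoint has_btype (v : val) (B : btype) : bool :=
  match v, B with
  | VInt _, BInt => true
  | VStr _, BStr => true
  | VBool _, BBool => true
  | VPair v1 v2, BPair B1 B2 => has_btype v1 B1 && has_btype v2 B2
  | _, _ => false
  end.

Fixpoint val_eqb (v w : val) : bool :=
  match v, w with
  | VInt a, VInt b => Z.eqb a b
  | VStr a, VStr b => String.eqb a b
  | VBool a, VBool b => Bool.eqb a b
  | VPair a1 a2, VPair b1 b2 => val_eqb a1 b1 && val_eqb a2 b2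
  | _, _ => false
  end.

Inductive vexp : Type := EVal (v : val) | EVar (x : var).

Inductive bpred : Type :=
| ATt | AFf
| AEq (a1 a2 : vexp)
| ALe (a1 a2 : vexp)
| AAnd (A1 A2 : bpred)
| ANot (A : bpred)
| AIsVal (B : btype) (a : vexp).

(* A evaluates to b (only closed predicates evaluate) *)
Fixpoint peval (A : bpred) : option bool :=
  match A with
  | ATt => Some true
  | AFf => Some false
  | AEq (EVal v) (EVal w) => Some (val_eqb v w)
  | ALe (EVal (VInt a)) (EVal (VInt b)) => Some (Z.leb a b)
  | AAnd A1 A2 =>
      match peval A1, peval A2 with
      | Some b1, Some b2 => Some (b1 && b2)
      | _, _ => None
      end
  | ANot A => option_map negb (peval A)
  | AIsVal B (EVal v) => Some (has_btype v B)
  | _ => None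
  end.

Definition venv := var -> option btype.
Definition venv_empty : venv := fun _ => None.
Definition venv_upd (G : venv) (x : var) (B : btype) : venv :=
  fun y => if Nat.eqb y x then Some B else G y.

Definition vexp_typed (G : venv) (a : vexp) (B : btype) : Prop :=
  match a with
  | EVar x => G x = Some B
  | EVal v => has_btype v B = true
  end.

Inductive pred_typed (G : venv) : bpred -> Prop :=
| ptTt : pred_typed G ATt
| ptFf : pred_typed G AFf
| ptEq : forall a1 a2 B, vexp_typed G a1 B -> vexp_typed G a2 B -> pred_typed G (AEq a1 a2)
| ptLe : forall a1 a2, vexp_typed G a1 BInt -> vexp_typed G a2 BInt -> pred_typed G (ALe a1 a2)
| ptAnd : forall A1 A2, pred_typed G A1 -> pred_typed G A2 -> pred_typed G (AAnd A1 A2)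
| ptNot : forall A, pred_typed G A -> pred_typed G (ANot A)
| ptIsVal : forall B a B', vexp_typed G a B' -> pred_typed G (AIsVal B a).

Definition vsub_exp (x : var) (v : val) (a : vexp) : vexp :=
  match a with
  | EVar y => if Nat.eqb y x then EVal v else a
  | EVal _ => a
  end.

Fixpoint vsub_pred (x : var) (v : val) (A : bpred) : bpred :=
  match A with
  | AEq a1 a2 => AEq (vsub_exp x v a1) (vsub_exp x v a2)
  | ALe a1 a2 => ALe (vsub_exp x v a1) (vsub_exp x v a2)
  | AAnd A1 A2 => AAnd (vsub_pred x v A1) (vsub_pred x v A2)
  | ANot A => ANot (vsub_pred x v A)
  | AIsVal B a => AIsVal B (vsub_exp x v a)
  | _ => A
  end.

Inductive act : Type :=
| AOut (l : label) (v : val)    (* <| l(v)  : send (process) / send to process (monitor) *)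
| AIn (l : label) (v : val)
| AOutE (l : label) (v : val)   (* black up-triangle: monitor sends to environment *)
| AInE (l : label) (v : val)    (* black down-triangle: monitor receives from environment *)
| ATau.

(* ---------- processes (recursion variables as de Bruijn indices) ---------- *)
Inductive proc : Type :=
| PSend (l : label) (a : vexp) (P : proc)
| PBranch (bs : list (label * var * proc))
| PRec (P : proc)
| PVar (n : nat)
| PIf (A : bpred) (P Q : proc)
| PNil.

Fixpoint plift (c : nat) (P : proc) : proc :=
  match P with
  | PSend l a P => PSend l a (plift c P)
  | PBranch bs => PBranch (map (fun '(lx, Q) => (lx, plift c Q)) bs)
  | PRec P => PRec (plift (S c) P)
  | PVar n => if c <=? n then PVar (S n) else PVar n
  | PIf A P Q => PIf A (plift c P) (plift c Q)
  | PNil => PNil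
  end.

Fixpoint psubst (k : nat) (Q : proc) (P : proc) : proc :=
  match P with
  | PSend l a P => PSend l a (psubst k Q P)
  | PBranch bs => PBranch (map (fun '(lx, R) => (lx, psubst k Q R)) bs)
  | PRec P => PRec (psubst (S k) (plift 0 Q) P)
  | PVar n => if Nat.eqb n k then Q else if k <? n then PVar (pred n) else PVar n
  | PIf A P1 P2 => PIf A (psubst k Q P1) (psubst k Q P2)
  | PNil => PNil
  end.

(* P[v/x]  (values are closed, so no capture) *)
Fixpoint pvsubst (x : var) (v : val) (P : proc) : proc :=
  match P with
  | PSend l a P => PSend l (vsub_exp x v a) (pvsubst x v P)
  | PBranch bs =>
      PBranch (map (fun '(ly, R) => (ly, if Nat.eqb (snd ly) x then R else pvsubst x v R)) bs)
  | PRec P => PRec (pvsubst x v P)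
  | PVar n => PVar n
  | PIf A P1 P2 => PIf (vsub_pred x v A) (pvsubst x v P1) (pvsubst x v P2)
  | PNil => PNil
  end.

Fixpoint punguarded (k : nat) (P : proc) : bool :=
  match P with
  | PVar n => Nat.eqb n k
  | PRec P => punguarded (S k) P
  | PIf _ P Q => punguarded k P || punguarded k Q
  | _ => false
  end.

Fixpoint pguarded (P : proc) : Prop :=
  match P with
  | PSend _ _ P => pguarded P
  | PBranch bs => fold_right and True (map (fun '(_, Q) => pguarded Q) bs)
  | PRec P => punguarded 0 P = false /\ pguarded P
  | PVar _ => True
  | PIf _ P Q => pguarded P /\ pguarded Q
  | PNil => True
  end.

Inductive ptrans : proc -> act -> proc -> Prop :=
| ptr_rec : forall P, ptrans (PRec P) ATau (psubst 0 (PRec P) P)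
| ptr_send : forall l v P, ptrans (PSend l (EVal v) P) (AOut l v) P
| ptr_branch : forall bs l x P v,
    In (l, x, P) bs -> ptrans (PBranch bs) (AIn l v) (pvsubst x v P)
| ptr_if_t : forall A P Q, peval A = Some true -> ptrans (PIf A P Q) ATau P
| ptr_if_f : forall A P Q, peval A = Some false -> ptrans (PIf A P Q) ATau Q.

(* ---------- session types (recursion variables as de Bruijn indices) ---------- *)
Inductive stype : Type :=
| TSel (bs : list (label * btype * stype))
| TBra (bs : list (label * btype * stype))
| TRec (S : stype)
| TVar (n : nat)
| TEnd.

Fixpoint tlift (c : nat) (S : stype) : stype :=
  match S with
  | TSel bs => TSel (map (fun '(lb, T) => (lb, tlift c T)) bs)
  | TBra bs => TBra (map (fun '(lb, T) => (lb, tlift c T)) bs)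
  | TRec T => TRec (tlift (Datatypes.S c) T)
  | TVar n => if c <=? n then TVar (Datatypes.S n) else TVar n
  | TEnd => TEnd
  end.

Fixpoint tsubst (k : nat) (U : stype) (S : stype) : stype :=
  match S with
  | TSel bs => TSel (map (fun '(lb, T) => (lb, tsubst k U T)) bs)
  | TBra bs => TBra (map (fun '(lb, T) => (lb, tsubst k U T)) bs)
  | TRec T => TRec (tsubst (Datatypes.S k) (tlift 0 U) T)
  | TVar n => if Nat.eqb n k then U else if k <? n then TVar (pred n) else TVar n
  | TEnd => TEnd
  end.

Fixpoint tunguarded (k : nat) (S : stype) : bool :=
  match S with
  | TVar n => Nat.eqb n k
  | TRec T => tunguarded (Datatypes.S k) T
  | _ => false
  end.

Definition blabel {A B : Type} (b : label * A * B) : label := fst (fst b).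

Fixpoint wf_stype (S : stype) : Prop :=
  match S with
  | TSel bs | TBra bs =>
      bs <> [] /\ NoDup (map blabel bs) /\
      fold_right and True (map (fun '(_, T) => wf_stype T) bs)
  | TRec T => tunguarded 0 T = false /\ wf_stype T
  | TVar _ => True
  | TEnd => True
  end.

(* equi-recursive identification: the congruence generated by
   rec X.S = S[rec X.S/X] (and by the irrelevance of the order of branches) *)
Inductive teq : stype -> stype -> Prop :=
| teq_refl : forall S, teq S S
| teq_sym : forall S T, teq S T -> teq T S
| teq_trans : forall S T U, teq S T -> teq T U -> teq S U
| teq_unfold : forall S, teq (TRec S) (tsubst 0 (TRec S) S)
| teq_rec : forall S T, teq S T -> teq (TRec S) (TRec T)
| teq_sel : forall bs1 bs2,
    Forall2 (fun b1 b2 => fst b1 = fst b2 /\ teq (snd b1) (snd b2)) bs1 bs2 ->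
    teq (TSel bs1) (TSel bs2)
| teq_bra : forall bs1 bs2,
    Forall2 (fun b1 b2 => fst b1 = fst b2 /\ teq (snd b1) (snd b2)) bs1 bs2 ->
    teq (TBra bs1) (TBra bs2)
| teq_sel_perm : forall bs1 bs2, Permutation bs1 bs2 -> teq (TSel bs1) (TSel bs2)
| teq_bra_perm : forall bs1 bs2, Permutation bs1 bs2 -> teq (TBra bs1) (TBra bs2).

Definition penv := list stype.   (* Theta, indexed by de Bruijn process variables *)

Inductive typed : penv -> venv -> proc -> stype -> Prop :=
| tBra : forall Th G pbs tbs,
    NoDup (map blabel pbs) ->
    (forall l B S, In (l, B, S) tbs ->
       exists x P, In (l, x, P) pbs /\ typed Th (venv_upd G x B) P S) ->
    typed Th G (PBranch pbs) (TBra tbs)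
| tSel : forall Th G l a P tbs B S,
    In (l, B, S) tbs -> vexp_typed G a B -> typed Th G P S ->
    typed Th G (PSend l a P) (TSel tbs)
| tRec : forall Th G P S, typed (S :: Th) G P S -> typed Th G (PRec P) S
| tPVar : forall Th G n S, nth_error Th n = Some S -> typed Th G (PVar n) S
| tIf : forall Th G A P Q S,
    pred_typed G A -> typed Th G P S -> typed Th G Q S -> typed Th G (PIf A P Q) S
| tNil : forall Th G, typed Th G PNil TEnd
| tEq : forall Th G P S S', typed Th G P S -> teq S S' -> typed Th G P S'.

Inductive mon : Type :=
| MSendP (l : label) (a : vexp) (M : mon)
| MRecvP (bs : list (label * var * mon))
| MSendE (l : label) (a : vexp) (M : mon)
| MRecvE (bs : list (label * var * mon))
| MRec (M : mon)
| MVar (n : nat)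
| MIf (A : bpred) (M N : mon)
| MNil
| MNoP
| MNoE.

Fixpoint mlift (c : nat) (M : mon) : mon :=
  match M with
  | MSendP l a M => MSendP l a (mlift c M)
  | MRecvP bs => MRecvP (map (fun '(lx, N) => (lx, mlift c N)) bs)
  | MSendE l a M => MSendE l a (mlift c M)
  | MRecvE bs => MRecvE (map (fun '(lx, N) => (lx, mlift c N)) bs)
  | MRec M => MRec (mlift (S c) M)
  | MVar n => if c <=? n then MVar (S n) else MVar n
  | MIf A M N => MIf A (mlift c M) (mlift c N)
  | M => M
  end.

Fixpoint msubst (k : nat) (Q : mon) (M : mon) : mon :=
  match M with
  | MSendP l a M => MSendP l a (msubst k Q M)
  | MRecvP bs => MRecvP (map (fun '(lx, N) => (lx, msubst k Q N)) bs)
  | MSendE l a M => MSendE l a (msubst k Q M)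
  | MRecvE bs => MRecvE (map (fun '(lx, N) => (lx, msubst k Q N)) bs)
  | MRec M => MRec (msubst (S k) (mlift 0 Q) M)
  | MVar n => if Nat.eqb n k then Q else if k <? n then MVar (pred n) else MVar n
  | MIf A M N => MIf A (msubst k Q M) (msubst k Q N)
  | M => M
  end.

Fixpoint mvsubst (x : var) (v : val) (M : mon) : mon :=
  match M with
  | MSendP l a M => MSendP l (vsub_exp x v a) (mvsubst x v M)
  | MRecvP bs =>
      MRecvP (map (fun '(ly, N) => (ly, if Nat.eqb (snd ly) x then N else mvsubst x v N)) bs)
  | MSendE l a M => MSendE l (vsub_exp x v a) (mvsubst x v M)
  | MRecvE bs =>
      MRecvE (map (fun '(ly, N) => (ly, if Nat.eqb (snd ly) x then N else mvsubst x v N)) bs)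
  | MRec M => MRec (mvsubst x v M)
  | MIf A M N => MIf (vsub_pred x v A) (mvsubst x v M) (mvsubst x v N)
  | M => M
  end.

Inductive mtrans : mon -> act -> mon -> Prop :=
| mtr_sendP : forall l v M, mtrans (MSendP l (EVal v) M) (AOut l v) M
| mtr_sendE : forall l v M, mtrans (MSendE l (EVal v) M) (AOutE l v) M
| mtr_rec : forall M, mtrans (MRec M) ATau (msubst 0 (MRec M) M)
| mtr_recvP : forall bs l x M v,
    In (l, x, M) bs -> mtrans (MRecvP bs) (AIn l v) (mvsubst x v M)
| mtr_recvE : forall bs l x M v,
    In (l, x, M) bs -> mtrans (MRecvE bs) (AInE l v) (mvsubst x v M)
| mtr_if_t : forall A M N, peval A = Some true -> mtrans (MIf A M N) ATau M
| mtr_if_f : forall A M N, peval A = Some false -> mtrans (MIf A M N) ATau N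
| mtr_violP : forall bs l v,
    ~ In l (map blabel bs) -> mtrans (MRecvP bs) (AIn l v) MNoP
| mtr_violE : forall bs l v,
    ~ In l (map blabel bs) -> mtrans (MRecvE bs) (AInE l v) MNoE.

Inductive strans : proc * mon -> act -> proc * mon -> Prop :=
| st_out : forall P P' M M' l v,
    ptrans P (AOut l v) P' -> mtrans M (AIn l v) M' -> strans (P, M) ATau (P', M')
| st_in : forall P P' M M' l v,
    ptrans P (AIn l v) P' -> mtrans M (AOut l v) M' -> strans (P, M) ATau (P', M')
| st_envOut : forall P M M' l v,
    mtrans M (AOutE l v) M' -> strans (P, M) (AOutE l v) (P, M')
| st_envIn : forall P M M' l v,
    mtrans M (AInE l v) M' -> strans (P, M) (AInE l v) (P, M')
| st_tauP : forall P P' M, ptrans P ATau P' -> strans (P, M) ATau (P', M)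
| st_tauM : forall P M M', mtrans M ATau M' -> strans (P, M) ATau (P, M').

(* weak transitions  c ==t==> c'  (t: a trace of environment actions) *)
Inductive wtrans : proc * mon -> list act -> proc * mon -> Prop :=
| wt_refl : forall c, wtrans c [] c
| wt_tau : forall c c' t c'', strans c ATau c' -> wtrans c' t c'' -> wtrans c t c''
| wt_vis : forall c a c' t c'', a <> ATau -> strans c a c' -> wtrans c' t c'' ->
    wtrans c (a :: t) c''.

Definition xm : var := 0%nat.   (* the bound variable x_i of every synthesised branch *)

Fixpoint synth (S : stype) : mon :=
  match S with
  | TSel bs =>
      MRecvP (map (fun '(lB, T) =>
                (fst lB, xm,
                 MIf (AIsVal (snd lB) (EVar xm))
                     (MSendE (fst lB) (EVar xm) (synth T)) MNoP)) bs)
  | TBra bs =>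
      MRecvE (map (fun '(lB, T) =>
                (fst lB, xm,
                 MIf (AIsVal (snd lB) (EVar xm))
                     (MSendP (fst lB) (EVar xm) (synth T)) MNoE)) bs)
  | TRec T => MRec (synth T)
  | TVar n => MVar n
  | TEnd => MNil
  end.

(* Main.v *)
Require Import Defs.
From Stdlib Require Import List Arith Lia Permutation.
Import ListNotations.

Fixpoint stype_ind' (Pr : stype -> Prop)
  (Hsel : forall bs, Forall (fun b => Pr (snd b)) bs -> Pr (TSel bs))
  (Hbra : forall bs, Forall (fun b => Pr (snd b)) bs -> Pr (TBra bs))
  (Hrec : forall T, Pr T -> Pr (TRec T))
  (Hvar : forall n, Pr (TVar n))
  (Hend : Pr TEnd) (S : stype) {struct S} : Pr S :=
  let go := fix go (l : list (label * btype * stype)) : Forall (fun b => Pr (snd b)) l :=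
      match l with
      | [] => Forall_nil _
      | (lb, T) :: r => @Forall_cons _ (fun b => Pr (snd b)) (lb, T) r
                          (stype_ind' Pr Hsel Hbra Hrec Hvar Hend T) (go r)
      end in
  match S with
  | TSel bs => Hsel bs (go bs)
  | TBra bs => Hbra bs (go bs)
  | TRec T => Hrec T (stype_ind' Pr Hsel Hbra Hrec Hvar Hend T)
  | TVar n => Hvar n
  | TEnd => Hend
  end.

Lemma typed_ind2 (Pr : penv -> venv -> proc -> stype -> Prop)
 (HBra : forall Th G pbs tbs, NoDup (map blabel pbs) ->
     (forall l B S, In (l, B, S) tbs -> exists x P, In (l, x, P) pbs /\
        typed Th (venv_upd G x B) P S /\ Pr Th (venv_upd G x B) P S) ->
     Pr Th G (PBranch pbs) (TBra tbs))
 (HSel : forall Th G l a P tbs B S, In (l,B,S) tbs -> vexp_typed G a B ->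
     typed Th G P S -> Pr Th G P S -> Pr Th G (PSend l a P) (TSel tbs))
 (HRec : forall Th G P S, typed (S::Th) G P S -> Pr (S::Th) G P S -> Pr Th G (PRec P) S)
 (HVar : forall Th G n S, nth_error Th n = Some S -> Pr Th G (PVar n) S)
 (HIf : forall Th G A P Q S, pred_typed G A -> typed Th G P S -> Pr Th G P S ->
     typed Th G Q S -> Pr Th G Q S -> Pr Th G (PIf A P Q) S)
 (HNil : forall Th G, Pr Th G PNil TEnd)
 (HEq : forall Th G P S S', typed Th G P S -> Pr Th G P S -> teq S S' -> Pr Th G P S') :
 forall Th G P S, typed Th G P S -> Pr Th G P S.
Proof.
  fix IH 5. intros Th G P S H. destruct H.
  - apply HBra; auto. intros l B S0 Hin.
    destruct (H0 l B S0 Hin) as (x & P & Hi & Ht). exists x, P. split; [exact Hi|].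
    split; [exact Ht|]. exact (IH _ _ _ _ Ht).
  - eapply HSel; eauto.
  - apply HRec; auto.
  - apply HVar; auto.
  - apply HIf; auto.
  - apply HNil.
  - eapply HEq; eauto.
Qed.

Arguments Nat.leb : simpl never.
Arguments Nat.eqb : simpl never.
Arguments Nat.ltb : simpl never.

Ltac nat_cases :=
  repeat (simpl; match goal with
  | |- context [?a <=? ?b] => destruct (Nat.leb_spec a b)
  | |- context [?a =? ?b] => destruct (Nat.eqb_spec a b)
  | |- context [?a <? ?b] => destruct (Nat.ltb_spec a b)
  end); simpl; try (exfalso; lia); try (f_equal; lia); auto.

Ltac list_case IH :=
  f_equal; rewrite ?map_map; (apply map_ext_in || (etransitivity; [|apply map_id]; apply map_ext_in)); intros [[? ?] ?] Hin;
  rewrite Forall_forall in IH; specialize (IH _ Hin); simpl in *; f_equal; auto.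

Lemma liftB : forall V i c, i <= c -> tlift (S c) (tlift i V) = tlift i (tlift c V).
Proof.
  intro V; induction V as [bs IH|bs IH|T IH|n|] using stype_ind'; intros i c Hic; simpl;
    try (list_case IH; fail).
  - f_equal. apply IH. lia.
  - nat_cases.
  - auto.
Qed.

Lemma substE : forall U W c, tsubst c W (tlift c U) = U.
Proof.
  intro U; induction U as [bs IH|bs IH|T IH|n|] using stype_ind'; intros W c; simpl; try (list_case IH; fail).
  - f_equal. apply IH.
  - nat_cases.
  - auto.
Qed.

Lemma liftD : forall V U c k, c <= k ->
  tlift c (tsubst k U V) = tsubst (S k) (tlift c U) (tlift c V).
Proof.
  intro V; induction V as [bs IH|bs IH|T IH|n|] using stype_ind'; intros U c k Hck; simpl; try (list_case IH; fail).
  - f_equal. rewrite IH by lia. f_equal. apply liftB; lia.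
  - nat_cases.
  - auto.
Qed.

Lemma liftA : forall S0 V k c, k <= c ->
  tlift c (tsubst k V S0) = tsubst k (tlift c V) (tlift (S c) S0).
Proof.
  intro S0; induction S0 as [bs IH|bs IH|T IH|n|] using stype_ind'; intros V k c Hkc; simpl; try (list_case IH; fail).
  - f_equal. rewrite IH by lia. f_equal. apply liftB; lia.
  - nat_cases.
  - auto.
Qed.

Lemma substC : forall S0 U V j k,
  tsubst (j+k) U (tsubst j V S0) = tsubst j (tsubst (j+k) U V) (tsubst (S (j+k)) (tlift j U) S0).
Proof.
  intro S0; induction S0 as [bs IH|bs IH|T IH|n|] using stype_ind'; intros U V j k; simpl; try (list_case IH; fail).
  - f_equal. rewrite (IH _ _ (S j) k). simpl. f_equal.
    + symmetry. apply (liftD V U 0 (j+k)). lia.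
    + f_equal. apply liftB. lia.
  - nat_cases; try (rewrite substE; auto).
    all: try (subst; nat_cases).
  - auto.
Qed.

Definition F2 (Pr : stype -> stype -> Prop) :=
  Forall2 (fun b1 b2 : label * btype * stype => fst b1 = fst b2 /\ teq (snd b1) (snd b2) /\ Pr (snd b1) (snd b2)).

Lemma teq_ind2 (Pr : stype -> stype -> Prop)
  (Hrefl : forall S, Pr S S)
  (Hsym : forall S T, teq S T -> Pr S T -> Pr T S)
  (Htrans : forall S T U, teq S T -> Pr S T -> teq T U -> Pr T U -> Pr S U)
  (Hunf : forall S, Pr (TRec S) (tsubst 0 (TRec S) S))
  (Hrec : forall S T, teq S T -> Pr S T -> Pr (TRec S) (TRec T))
  (Hsel : forall bs1 bs2, F2 Pr bs1 bs2 -> Pr (TSel bs1) (TSel bs2))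
  (Hbra : forall bs1 bs2, F2 Pr bs1 bs2 -> Pr (TBra bs1) (TBra bs2))
  (Hselp : forall bs1 bs2, Permutation bs1 bs2 -> Pr (TSel bs1) (TSel bs2))
  (Hbrap : forall bs1 bs2, Permutation bs1 bs2 -> Pr (TBra bs1) (TBra bs2)) :
  forall S T, teq S T -> Pr S T.
Proof.
  fix IH 3. intros S T H. destruct H.
  - apply Hrefl.
  - apply Hsym; auto.
  - eapply Htrans; eauto.
  - apply Hunf.
  - apply Hrec; auto.
  - apply Hsel. unfold F2.
    refine ((fix go l1 l2 (F : Forall2 _ l1 l2) : Forall2 _ l1 l2 :=
      match F with
      | Forall2_nil _ => Forall2_nil _
      | Forall2_cons x y Hxy F' =>
          match Hxy with conj e t => Forall2_cons x y (conj e (conj t (IH _ _ t))) (go _ _ F') end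
      end) _ _ H).
  - apply Hbra. unfold F2.
    refine ((fix go l1 l2 (F : Forall2 _ l1 l2) : Forall2 _ l1 l2 :=
      match F with
      | Forall2_nil _ => Forall2_nil _
      | Forall2_cons x y Hxy F' =>
          match Hxy with conj e t => Forall2_cons x y (conj e (conj t (IH _ _ t))) (go _ _ F') end
      end) _ _ H).
  - apply Hselp; auto.
  - apply Hbrap; auto.
Qed.

Lemma F2_map (Pr : stype -> stype -> Prop) (f g : stype -> stype) bs1 bs2 :
  F2 Pr bs1 bs2 -> (forall a b, teq a b -> Pr a b -> teq (f a) (g b)) ->
  Forall2 (fun b1 b2 => fst b1 = fst b2 /\ teq (snd b1) (snd b2))
    (map (fun '(lb, T) => (lb, f T)) bs1) (map (fun '(lb, T) => (lb, g T)) bs2).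
Proof.
  intros H Hf. induction H as [|[lb1 T1] [lb2 T2] l1 l2 [e [t p]] _ IHF]; simpl; constructor; auto.
  simpl in *. split; auto.
Qed.

Lemma teq_lift : forall U U', teq U U' -> forall c, teq (tlift c U) (tlift c U').
Proof.
  apply (teq_ind2 (fun U U' => forall c, teq (tlift c U) (tlift c U'))); intros.
  - apply teq_refl.
  - apply teq_sym; auto.
  - eapply teq_trans; eauto.
  - simpl. rewrite (liftA S (TRec S) 0 c) by lia. simpl. apply teq_unfold.
  - simpl. apply teq_rec; auto.
  - simpl. apply teq_sel. eapply F2_map; [eassumption|]; simpl; intros a b _ Hp; apply Hp.
  - simpl. apply teq_bra. eapply F2_map; [eassumption|]; simpl; intros a b _ Hp; apply Hp.
  - simpl. apply teq_sel_perm. apply Permutation_map; auto.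
  - simpl. apply teq_bra_perm. apply Permutation_map; auto.
Qed.

Lemma teq_subst1 : forall A A', teq A A' -> forall k U, teq (tsubst k U A) (tsubst k U A').
Proof.
  apply (teq_ind2 (fun A A' => forall k U, teq (tsubst k U A) (tsubst k U A'))); intros.
  - apply teq_refl.
  - apply teq_sym; auto.
  - eapply teq_trans; eauto.
  - simpl. pose proof (substC S U (TRec S) 0 k) as E. simpl in E. rewrite E. apply teq_unfold.
  - simpl. apply teq_rec; auto.
  - simpl. apply teq_sel. eapply F2_map; [eassumption|]; simpl; intros a b _ Hp; apply Hp.
  - simpl. apply teq_bra. eapply F2_map; [eassumption|]; simpl; intros a b _ Hp; apply Hp.
  - simpl. apply teq_sel_perm. apply Permutation_map; auto.
  - simpl. apply teq_bra_perm. apply Permutation_map; auto.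
Qed.

Lemma Forall2_self_map (bs : list (label * btype * stype)) (f g : stype -> stype) :
  Forall (fun b => teq (f (snd b)) (g (snd b))) bs ->
  Forall2 (fun b1 b2 => fst b1 = fst b2 /\ teq (snd b1) (snd b2))
    (map (fun '(lb, T) => (lb, f T)) bs) (map (fun '(lb, T) => (lb, g T)) bs).
Proof.
  induction 1 as [|[lb T] r Hx _ IHr]; simpl; constructor; auto.
Qed.

Lemma teq_subst2 : forall A U U' k, teq U U' -> teq (tsubst k U A) (tsubst k U' A).
Proof.
  intro A; induction A as [bs IH|bs IH|T IH|n|] using stype_ind'; intros U U' k HU; simpl.
  - apply teq_sel. apply Forall2_self_map. rewrite Forall_forall in *. intros b Hb. apply IH; auto.
  - apply teq_bra. apply Forall2_self_map. rewrite Forall_forall in *. intros b Hb. apply IH; auto.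
  - apply teq_rec. apply IH. apply teq_lift; auto.
  - destruct (n =? k); [auto|apply teq_refl].
  - apply teq_refl.
Qed.

Lemma teq_subst : forall A A' U U' k, teq A A' -> teq U U' -> teq (tsubst k U A) (tsubst k U' A').
Proof.
  intros. eapply teq_trans. apply teq_subst1; eauto. apply teq_subst2; auto.
Qed.

Definition unf1 (S : stype) : stype :=
  match S with TRec T => tsubst 0 (TRec T) T | _ => S end.
Fixpoint unfk (n : nat) (S : stype) : stype :=
  match n with 0 => S | Datatypes.S n' => unfk n' (unf1 S) end.
Definition unf S Z := exists n, unfk n S = Z.
Definition head (Z : stype) : Prop := match Z with TRec _ => False | _ => True end.

Lemma unfk_add : forall a b S, unfk (a + b) S = unfk b (unfk a S).
Proof. induction a; simpl; auto. Qed.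

Lemma unfk_head : forall n Z, head Z -> unfk n Z = Z.
Proof. induction n; intros [] H; simpl in *; auto; contradiction. Qed.

Lemma unf_det : forall S Z1 Z2, unf S Z1 -> unf S Z2 -> head Z1 -> head Z2 -> Z1 = Z2.
Proof.
  intros S Z1 Z2 [n1 H1] [n2 H2] h1 h2.
  assert (E1 : unfk (n1 + n2) S = Z1) by (rewrite unfk_add, H1; apply unfk_head; auto).
  assert (E2 : unfk (n2 + n1) S = Z2) by (rewrite unfk_add, H2; apply unfk_head; auto).
  rewrite Nat.add_comm in E2. congruence.
Qed.

Lemma unf_nonrec : forall Z W, head Z -> unf Z W -> W = Z.
Proof. intros Z W h [n H]. rewrite unfk_head in H; auto. Qed.

Lemma unf1_subst : forall X k U, unf1 (tsubst k U (TRec X)) = tsubst k U (unf1 (TRec X)).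
Proof.
  intros. simpl. pose proof (substC X U (TRec X) 0 k) as E. simpl in E. rewrite E. reflexivity.
Qed.

Lemma unf_subst : forall S Z k U, unf S Z -> unf (tsubst k U S) (tsubst k U Z).
Proof.
  intros S Z k U [n H]. revert S H. induction n; intros S H; simpl in H.
  - subst. exists 0. reflexivity.
  - destruct S as [bs|bs|X|m|]; try (apply IHn; exact H).
    destruct (IHn _ H) as [m Hm]. exists (Datatypes.S m). simpl unfk.
    pose proof (unf1_subst X k U) as E. simpl in E. simpl. rewrite E. exact Hm.
Qed.

Lemma unf_subst_head : forall n S k U Z, unfk n (tsubst k U S) = Z -> head Z ->
  exists S', unf S S' /\ head S'.
Proof.
  induction n; intros S k U Z H h.
  - simpl in H. subst. destruct S as [bs|bs|X|m|]; [ | | simpl in h; contradiction | | ];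
      eexists; (split; [exists 0; reflexivity | exact I]).
  - destruct S as [bs|bs|X|m|].
    + exists (TSel bs); split; [exists 0; auto| exact I].
    + exists (TBra bs); split; [exists 0; auto| exact I].
    + simpl in H. pose proof (unf1_subst X k U) as E. simpl in E. rewrite E in H.
      destruct (IHn _ _ _ _ H h) as [S' [[m Hm] hS']]. exists S'. split; auto.
      exists (Datatypes.S m). simpl. exact Hm.
    + exists (TVar m); split; [exists 0; auto| exact I].
    + exists TEnd; split; [exists 0; auto| exact I].
Qed.

Definition lmatch (bs bs' : list (label * btype * stype)) : Prop :=
  forall l B X, In (l, B, X) bs -> exists X', In (l, B, X') bs' /\ teq X X'.

Definition hmatch (Z Z' : stype) : Prop :=
  match Z, Z' with
  | TSel bs, TSel bs' => lmatch bs bs'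
  | TBra bs, TBra bs' => lmatch bs bs'
  | TEnd, TEnd => True
  | TVar n, TVar m => n = m
  | _, _ => False
  end.

Definition Hd S T := forall Z, unf S Z -> head Z -> exists Z', unf T Z' /\ hmatch Z Z'.

Lemma lmatch_refl : forall bs, lmatch bs bs.
Proof. intros bs l B X H. exists X. split; auto. apply teq_refl. Qed.

Lemma hmatch_refl : forall Z, head Z -> hmatch Z Z.
Proof. intros [] h; simpl in *; auto; apply lmatch_refl. Qed.

Lemma lmatch_trans : forall a b c, lmatch a b -> lmatch b c -> lmatch a c.
Proof.
  intros a b c H1 H2 l B X Hi. destruct (H1 _ _ _ Hi) as [X' [Hi' t1]].
  destruct (H2 _ _ _ Hi') as [X'' [Hi'' t2]]. exists X''. split; auto. eapply teq_trans; eauto.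
Qed.

Lemma hmatch_trans : forall a b c, hmatch a b -> hmatch b c -> hmatch a c.
Proof.
  intros [] [] [] H1 H2; simpl in *; try contradiction; eauto using lmatch_trans; congruence.
Qed.

Lemma hmatch_head : forall a b, hmatch a b -> head b.
Proof. intros [] [] H; simpl in *; auto. Qed.

Lemma unf_step : forall X Z, unf (tsubst 0 (TRec X) X) Z -> unf (TRec X) Z.
Proof. intros X Z [n H]. exists (Datatypes.S n). exact H. Qed.

Lemma unf_trans : forall A B C, unf A B -> unf B C -> unf A C.
Proof. intros A B0 C [n H] [m H']. exists (n + m). rewrite unfk_add. congruence. Qed.

Lemma rec_loop : forall S Z, unf (TRec S) Z -> head Z -> unf S (TVar 0) -> False.
Proof.
  intros S Z [n Hn] h H0.
  apply (unf_subst _ _ 0 (TRec S)) in H0. simpl in H0. destruct H0 as [m Hm].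
  assert (L : forall j, unfk (j * Datatypes.S m) (TRec S) = TRec S).
  { induction j. reflexivity. replace (Datatypes.S j * Datatypes.S m) with (Datatypes.S m + j * Datatypes.S m) by lia. rewrite unfk_add. simpl. rewrite Hm. exact IHj. }
  specialize (L n). replace (n * Datatypes.S m) with (n + n * m) in L by lia.
  rewrite unfk_add, Hn in L. rewrite (unfk_head _ _ h) in L. subst Z. rewrite L in h. exact h.
Qed.

Lemma lmatch_map : forall bs bs' f g,
  lmatch bs bs' -> (forall X X', teq X X' -> teq (f X) (g X')) ->
  lmatch (map (fun '(lb, T) => (lb, f T)) bs) (map (fun '(lb, T) => (lb, g T)) bs').
Proof.
  intros bs bs' f g H Hf l B X Hi. apply in_map_iff in Hi.
  destruct Hi as [[[l0 B0] X0] [E Hi]]. inversion E; subst.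
  destruct (H _ _ _ Hi) as [X' [Hi' t]]. exists (g X'). split; auto.
  apply in_map_iff. exists (l, B, X'). auto.
Qed.

Lemma hd_rec : forall S T, Hd S T -> teq S T -> Hd (TRec S) (TRec T).
Proof.
  intros S T H t Z HZ hZ.
  destruct HZ as [n Hn]. destruct n as [|n]. { simpl in Hn. subst. contradiction. }
  simpl in Hn. destruct (unf_subst_head _ _ _ _ _ Hn hZ) as [S' [HS' hS']].
  destruct (H _ HS' hS') as [T' [HT' hm]].
  assert (HZ : unf (TRec S) Z) by (exists (Datatypes.S n); exact Hn).
  assert (US : unf (TRec S) (tsubst 0 (TRec S) S')) by (apply unf_step, unf_subst; auto).
  assert (UT : unf (TRec T) (tsubst 0 (TRec T) T')) by (apply unf_step, unf_subst; auto).
  assert (tr : teq (TRec S) (TRec T)) by (apply teq_rec; auto).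
  destruct S' as [bs|bs|X|m|]; destruct T' as [bs'|bs'|X'|m'|]; simpl in hm; try contradiction.
  - rewrite (unf_det _ _ _ HZ US hZ I). eexists; split; [exact UT|]. simpl.
    apply lmatch_map; auto. intros. apply teq_subst; auto.
  - rewrite (unf_det _ _ _ HZ US hZ I). eexists; split; [exact UT|]. simpl.
    apply lmatch_map; auto. intros. apply teq_subst; auto.
  - subst m'. destruct m as [|m].
    + exfalso. exact (rec_loop S Z HZ hZ HS').
    + simpl in US, UT. rewrite (unf_det _ _ _ HZ US hZ I). eexists; split; [exact UT|]. simpl. auto.
  - simpl in US, UT. rewrite (unf_det _ _ _ HZ US hZ I). eexists; split; [exact UT|]. simpl. auto.
Qed.

Lemma lmatch_F2 : forall bs1 bs2,
  Forall2 (fun b1 b2 => fst b1 = fst b2 /\ teq (snd b1) (snd b2)) bs1 bs2 -> lmatch bs1 bs2.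
Proof.
  induction 1 as [|[lb1 T1] [lb2 T2] l1 l2 [e t] _ IH]; intros l B X Hi; simpl in *.
  - contradiction.
  - destruct Hi as [E|Hi].
    + inversion E; subst. exists T2. auto.
    + destruct (IH _ _ _ Hi) as [X' [? ?]]. eauto.
Qed.

Lemma lmatch_F2r : forall bs1 bs2,
  Forall2 (fun b1 b2 => fst b1 = fst b2 /\ teq (snd b1) (snd b2)) bs1 bs2 -> lmatch bs2 bs1.
Proof.
  induction 1 as [|[lb1 T1] [lb2 T2] l1 l2 [e t] _ IH]; intros l B X Hi; simpl in *.
  - contradiction.
  - destruct Hi as [E|Hi].
    + inversion E; subst. exists T1. split; auto. apply teq_sym; auto.
    + destruct (IH _ _ _ Hi) as [X' [? ?]]. eauto.
Qed.

Lemma lmatch_perm : forall bs1 bs2, Permutation bs1 bs2 -> lmatch bs1 bs2.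
Proof.
  intros bs1 bs2 P l B X Hi. exists X. split. eapply Permutation_in; eauto. apply teq_refl.
Qed.

Lemma teq_H : forall S T, teq S T -> Hd S T /\ Hd T S.
Proof.
  apply teq_ind2; intros.
  - split; intros Z HZ hZ; exists Z; split; auto; apply hmatch_refl; auto.
  - tauto.
  - destruct H0 as [A1 A2], H2 as [B1 B2]. split; intros Z HZ hZ.
    + destruct (A1 _ HZ hZ) as [Z' [HZ' m1]]. destruct (B1 _ HZ' (hmatch_head _ _ m1)) as [Z'' [? m2]].
      eauto using hmatch_trans.
    + destruct (B2 _ HZ hZ) as [Z' [HZ' m1]]. destruct (A2 _ HZ' (hmatch_head _ _ m1)) as [Z'' [? m2]].
      eauto using hmatch_trans.
  - split; intros Z HZ hZ.
    + destruct HZ as [[|n] Hn]. { simpl in Hn; subst; contradiction. }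
      exists Z. split; [exists n; exact Hn|]. apply hmatch_refl; auto.
    + exists Z. split; [apply unf_step; auto|]. apply hmatch_refl; auto.
  - destruct H0. split; apply hd_rec; auto. apply teq_sym; auto.
  - assert (F : Forall2 (fun b1 b2 => fst b1 = fst b2 /\ teq (snd b1) (snd b2)) bs1 bs2).
    { eapply Forall2_impl; [|exact H]. simpl. tauto. }
    split; intros Z HZ hZ; apply unf_nonrec in HZ; auto; subst;
      eexists; (split; [exists 0; reflexivity|]); simpl.
    + apply lmatch_F2; auto.
    + apply lmatch_F2r; auto.
  - assert (F : Forall2 (fun b1 b2 => fst b1 = fst b2 /\ teq (snd b1) (snd b2)) bs1 bs2).
    { eapply Forall2_impl; [|exact H]. simpl. tauto. }
    split; intros Z HZ hZ; apply unf_nonrec in HZ; auto; subst;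
      eexists; (split; [exists 0; reflexivity|]); simpl.
    + apply lmatch_F2; auto.
    + apply lmatch_F2r; auto.
  - split; intros Z HZ hZ; apply unf_nonrec in HZ; auto; subst;
      eexists; (split; [exists 0; reflexivity|]); simpl; apply lmatch_perm; auto.
    apply Permutation_sym; auto.
  - split; intros Z HZ hZ; apply unf_nonrec in HZ; auto; subst;
      eexists; (split; [exists 0; reflexivity|]); simpl; apply lmatch_perm; auto.
    apply Permutation_sym; auto.
Qed.

Lemma teq_sel_lmatch : forall bs bs', teq (TSel bs) (TSel bs') -> lmatch bs bs'.
Proof.
  intros bs bs' t. destruct (teq_H _ _ t) as [H _].
  destruct (H (TSel bs) (ex_intro _ 0 eq_refl) I) as [Z' [HZ' m]].
  apply unf_nonrec in HZ'; [|exact I]. subst. exact m.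
Qed.

Lemma teq_bra_lmatch : forall bs bs', teq (TBra bs) (TBra bs') -> lmatch bs bs'.
Proof.
  intros bs bs' t. destruct (teq_H _ _ t) as [H _].
  destruct (H (TBra bs) (ex_intro _ 0 eq_refl) I) as [Z' [HZ' m]].
  apply unf_nonrec in HZ'; [|exact I]. subst. exact m.
Qed.

Lemma vexp_mono : forall G G' a B, vexp_typed G a B ->
  (forall y B, G y = Some B -> G' y = Some B) -> vexp_typed G' a B.
Proof. intros G G' [] B H M; simpl in *; auto. Qed.

Lemma pred_mono : forall G A, pred_typed G A -> forall G',
  (forall y B, G y = Some B -> G' y = Some B) -> pred_typed G' A.
Proof. induction 1; intros G' M; econstructor; eauto using vexp_mono. Qed.

Lemma blabel_map {X Y : Type} (f : Y -> Y) (bs : list (label * X * Y)) :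
  map blabel (map (fun '(lx, Q) => (lx, f Q)) bs) = map blabel bs.
Proof. rewrite map_map. apply map_ext. intros [[l x] Q]. reflexivity. Qed.

Lemma typed_mono : forall Th G P S, typed Th G P S -> forall G',
  (forall y B, G y = Some B -> G' y = Some B) -> typed Th G' P S.
Proof.
  apply (typed_ind2 (fun Th G P S => forall G', (forall y B, G y = Some B -> G' y = Some B) -> typed Th G' P S)); intros.
  - constructor; auto. intros l B S0 Hin. destruct (H0 _ _ _ Hin) as (x & P & Hi & Ht & IH).
    exists x, P. split; auto. apply IH. intros y B' E. unfold venv_upd in *.
    destruct (y =? x); auto.
  - econstructor; eauto using vexp_mono.
  - constructor; auto.
  - constructor; auto.
  - constructor; eauto using pred_mono.
  - constructor.
  - econstructor; eauto.
Qed.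

Lemma vexp_sub : forall G G0 x B v a B0, vexp_typed G a B0 ->
  (forall y, G y = venv_upd G0 x B y) -> has_btype v B = true ->
  vexp_typed G0 (vsub_exp x v a) B0.
Proof.
  intros G G0 x B v [w|y] B0 H E hv; simpl in *; auto.
  rewrite E in H. unfold venv_upd in H. destruct (y =? x); simpl; auto. inversion H; subst; auto.
Qed.

Lemma pred_sub : forall G A, pred_typed G A -> forall G0 x B v,
  (forall y, G y = venv_upd G0 x B y) -> has_btype v B = true ->
  pred_typed G0 (vsub_pred x v A).
Proof. induction 1; intros; simpl; econstructor; eauto using vexp_sub. Qed.

Lemma typed_vsub : forall Th G P S, typed Th G P S -> forall G0 x B v,
  (forall y, G y = venv_upd G0 x B y) -> has_btype v B = true ->
  typed Th G0 (pvsubst x v P) S.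
Proof.
  apply (typed_ind2 (fun Th G P S => forall G0 x B v,
    (forall y, G y = venv_upd G0 x B y) -> has_btype v B = true -> typed Th G0 (pvsubst x v P) S));
  intros; simpl.
  - constructor.
    + rewrite map_map. erewrite map_ext; [eauto|]. intros [[l y] R]. reflexivity.
    + intros l B' S0 Hin. destruct (H0 _ _ _ Hin) as (y & P0 & Hi & Ht & IH).
      exists y, (if y =? x then P0 else pvsubst x v P0). split.
      { apply in_map_iff. exists (l, y, P0). split; auto. }
      destruct (Nat.eqb_spec y x).
      * subst y. apply (typed_mono _ _ _ _ Ht). intros z Bz. unfold venv_upd.
        rewrite H1. unfold venv_upd. destruct (z =? x); auto.
      * apply (IH (venv_upd G0 y B') x B v); auto. intros z. unfold venv_upd.
        rewrite H1. unfold venv_upd.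
        destruct (Nat.eqb_spec z y); destruct (Nat.eqb_spec z x); subst; try contradiction; auto.
  - eapply tSel; [eassumption| eapply vexp_sub; eauto | eapply H2; eauto].
  - constructor; eauto.
  - constructor; auto.
  - constructor; eauto using pred_sub.
  - constructor.
  - econstructor; eauto.
Qed.

Lemma typed_lift : forall Th G P T, typed Th G P T -> forall A B0 U,
  Th = A ++ B0 -> typed (A ++ U :: B0) G (plift (length A) P) T.
Proof.
  apply (typed_ind2 (fun Th G P T => forall A B0 U,
    Th = A ++ B0 -> typed (A ++ U :: B0) G (plift (length A) P) T)); intros; subst; simpl.
  - constructor.
    + rewrite map_map. erewrite map_ext; [eauto|]. intros [[l y] R]. reflexivity.
    + intros l B S0 Hin. destruct (H0 _ _ _ Hin) as (y & P0 & Hi & Ht & IH).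
      exists y, (plift (length A) P0). split; auto.
      apply in_map_iff. exists (l, y, P0). split; auto.
  - econstructor; eauto.
  - constructor. apply (H0 (S :: A)). reflexivity.
  - destruct (Nat.leb_spec (length A) n); constructor.
    + rewrite nth_error_app2 in * by (simpl; lia).
      replace (Datatypes.S n - length A) with (Datatypes.S (n - length A)) by lia. simpl. auto.
    + rewrite nth_error_app1 in * by lia. auto.
  - constructor; eauto.
  - constructor.
  - econstructor; eauto.
Qed.

Lemma typed_psubst : forall Th G P T, typed Th G P T -> forall Th1 Th2 U Q,
  Th = Th1 ++ U :: Th2 -> (forall G', typed (Th1 ++ Th2) G' Q U) ->
  typed (Th1 ++ Th2) G (psubst (length Th1) Q P) T.
Proof.
  apply (typed_ind2 (fun Th G P T => forall Th1 Th2 U Q,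
    Th = Th1 ++ U :: Th2 -> (forall G', typed (Th1 ++ Th2) G' Q U) ->
    typed (Th1 ++ Th2) G (psubst (length Th1) Q P) T)); intros; subst; simpl.
  - constructor.
    + rewrite map_map. erewrite map_ext; [eauto|]. intros [[l y] R]. reflexivity.
    + intros l B S0 Hin. destruct (H0 _ _ _ Hin) as (y & P0 & Hi & Ht & IH).
      exists y, (psubst (length Th1) Q P0). split; eauto.
      apply in_map_iff. exists (l, y, P0). split; auto.
  - econstructor; eauto.
  - constructor. apply (H0 (S :: Th1) Th2 U (plift 0 Q)); auto.
    intros G'. apply (typed_lift _ _ _ _ (H2 G') [] (Th1 ++ Th2) S). reflexivity.
  - destruct (Nat.eqb_spec n (length Th1)).
    + subst. rewrite nth_error_app2 in H by lia. rewrite Nat.sub_diag in H. simpl in H.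
      inversion H; subst. auto.
    + destruct (Nat.ltb_spec (length Th1) n).
      * constructor. rewrite nth_error_app2 in * by lia.
        replace (n - length Th1) with (Datatypes.S (pred n - length Th1)) in H by lia. simpl in H. auto.
      * constructor. rewrite nth_error_app1 in * by lia. auto.
  - constructor; eauto.
  - constructor.
  - econstructor; eauto.
Qed.

Lemma inv_send : forall Th G Pp T, typed Th G Pp T -> forall l a P', Pp = PSend l a P' ->
  exists tbs B T', In (l, B, T') tbs /\ vexp_typed G a B /\ typed Th G P' T' /\ teq (TSel tbs) T.
Proof.
  induction 1; intros l0 a0 P0 E; inversion E; subst.
  - exists tbs, B, S. repeat split; auto. apply teq_refl.
  - destruct (IHtyped _ _ _ eq_refl) as (tbs & B & T' & ? & ? & ? & ?).
    exists tbs, B, T'. repeat split; auto. eapply teq_trans; eauto.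
Qed.

Lemma inv_branch : forall Th G Pp T, typed Th G Pp T -> forall pbs, Pp = PBranch pbs ->
  exists tbs, NoDup (map blabel pbs) /\
    (forall l B S, In (l, B, S) tbs -> exists x P, In (l, x, P) pbs /\ typed Th (venv_upd G x B) P S) /\
    teq (TBra tbs) T.
Proof.
  induction 1; intros pbs0 E; inversion E; subst.
  - exists tbs. repeat split; auto. apply teq_refl.
  - destruct (IHtyped _ eq_refl) as (tbs & ? & ? & ?).
    exists tbs. repeat split; auto. eapply teq_trans; eauto.
Qed.

Lemma inv_rec : forall Th G Pp T, typed Th G Pp T -> forall P0, Pp = PRec P0 ->
  exists T', typed (T' :: Th) G P0 T' /\ teq T' T.
Proof.
  induction 1; intros P1 E; inversion E; subst.
  - exists S. split; auto. apply teq_refl.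
  - destruct (IHtyped _ eq_refl) as (T' & ? & ?). exists T'. split; auto. eapply teq_trans; eauto.
Qed.

Lemma inv_if : forall Th G Pp T, typed Th G Pp T -> forall A P1 P2, Pp = PIf A P1 P2 ->
  exists T', typed Th G P1 T' /\ typed Th G P2 T' /\ teq T' T.
Proof.
  induction 1; intros A0 P1 P2 E; inversion E; subst.
  - exists S. repeat split; auto. apply teq_refl.
  - destruct (IHtyped _ _ _ eq_refl) as (T' & ? & ? & ?). exists T'. repeat split; auto.
    eapply teq_trans; eauto.
Qed.

Lemma sr_tau : forall P P' T, typed [] venv_empty P T -> ptrans P ATau P' -> typed [] venv_empty P' T.
Proof.
  intros P P' T Ht Hs. inversion Hs; subst.
  - destruct (inv_rec _ _ _ _ Ht _ eq_refl) as (T' & H1 & H2).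
    eapply tEq; [|exact H2].
    apply (typed_psubst _ _ _ _ H1 [] [] T' (PRec P0)); auto.
    intros G'. constructor. eapply typed_mono; [exact H1|]. intros y B E. discriminate.
  - destruct (inv_if _ _ _ _ Ht _ _ _ eq_refl) as (T' & H1 & H2 & H3). eapply tEq; eauto.
  - destruct (inv_if _ _ _ _ Ht _ _ _ eq_refl) as (T' & H1 & H2 & H3). eapply tEq; eauto.
Qed.

Lemma synth_lift : forall T c, synth (tlift c T) = mlift c (synth T).
Proof.
  intro T; induction T as [bs IH|bs IH|X IH|n|] using stype_ind'; intros c; simpl.
  - f_equal. rewrite !map_map. apply map_ext_in. intros [[l B] X] Hin.
    rewrite Forall_forall in IH. specialize (IH _ Hin). simpl in *. rewrite IH. reflexivity.
  - f_equal. rewrite !map_map. apply map_ext_in. intros [[l B] X] Hin.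
    rewrite Forall_forall in IH. specialize (IH _ Hin). simpl in *. rewrite IH. reflexivity.
  - f_equal. apply IH.
  - destruct (c <=? n); reflexivity.
  - reflexivity.
Qed.

Lemma synth_subst : forall T k U, synth (tsubst k U T) = msubst k (synth U) (synth T).
Proof.
  intro T; induction T as [bs IH|bs IH|X IH|n|] using stype_ind'; intros k U; simpl.
  - f_equal. rewrite !map_map. apply map_ext_in. intros [[l B] X] Hin.
    rewrite Forall_forall in IH. specialize (IH _ Hin). simpl in *. rewrite IH. reflexivity.
  - f_equal. rewrite !map_map. apply map_ext_in. intros [[l B] X] Hin.
    rewrite Forall_forall in IH. specialize (IH _ Hin). simpl in *. rewrite IH. reflexivity.
  - f_equal. rewrite IH, synth_lift. reflexivity.
  - destruct (n =? k); [reflexivity|]. destruct (k <? n); reflexivity.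
  - reflexivity.
Qed.

Lemma mvsubst_synth : forall T v, mvsubst xm v (synth T) = synth T.
Proof.
  intro T; induction T as [bs IH|bs IH|X IH|n|] using stype_ind'; intros v; simpl.
  - f_equal. rewrite !map_map. apply map_ext_in. intros [[l B] X] Hin. simpl.
    reflexivity.
  - f_equal. rewrite !map_map. apply map_ext_in. intros [[l B] X] Hin. simpl.
    reflexivity.
  - f_equal. apply IH.
  - reflexivity.
  - reflexivity.
Qed.

Fixpoint nd (S : stype) : Prop :=
  match S with
  | TSel bs | TBra bs =>
      NoDup (map blabel bs) /\ fold_right and True (map (fun '(_, T) => nd T) bs)
  | TRec T => nd T
  | _ => True
  end.

Lemma fr_iff : forall (Q : stype -> Prop) (bs : list (label * btype * stype)),
  fold_right and True (map (fun '(_, T) => Q T) bs) <-> (forall b, In b bs -> Q (snd b)).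
Proof.
  intros Q bs; induction bs as [|[lb T] r IH]; simpl.
  - split; auto. intros _ b [].
  - rewrite IH. split.
    + intros [H1 H2] b [E|Hb]; [subst; auto| auto].
    + intros H. split; [apply (H (lb, T)); auto| intros b Hb; apply H; auto].
Qed.

Lemma nd_sel : forall bs, nd (TSel bs) <-> NoDup (map blabel bs) /\ (forall b, In b bs -> nd (snd b)).
Proof. intros. simpl. rewrite (fr_iff nd). tauto. Qed.
Lemma nd_bra : forall bs, nd (TBra bs) <-> NoDup (map blabel bs) /\ (forall b, In b bs -> nd (snd b)).
Proof. intros. simpl. rewrite (fr_iff nd). tauto. Qed.

Lemma wf_nd : forall S, wf_stype S -> nd S.
Proof.
  intro S; induction S as [bs IH|bs IH|X IH|n|] using stype_ind'; intros W.
  - apply nd_sel. simpl in W. rewrite (fr_iff wf_stype) in W. destruct W as (_ & N & F).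
    split; auto. rewrite Forall_forall in IH. intros b Hb. apply IH; auto.
  - apply nd_bra. simpl in W. rewrite (fr_iff wf_stype) in W. destruct W as (_ & N & F).
    split; auto. rewrite Forall_forall in IH. intros b Hb. apply IH; auto.
  - simpl in *. apply IH. apply W.
  - exact I.
  - exact I.
Qed.

Lemma in_map_pair : forall (f : stype -> stype) (b : label * btype * stype) bs,
  In b (map (fun '(lb, T) => (lb, f T)) bs) -> exists b0, In b0 bs /\ fst b = fst b0 /\ snd b = f (snd b0).
Proof.
  intros f b bs H. apply in_map_iff in H. destruct H as [[lb T] [E Hi]]. subst. exists (lb, T). auto.
Qed.

Lemma nd_lift : forall U c, nd U -> nd (tlift c U).
Proof.
  intro U; induction U as [bs IH|bs IH|X IH|n|] using stype_ind'; intros c N; simpl tlift.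
  - apply nd_sel. apply nd_sel in N. destruct N as [N F]. rewrite blabel_map. split; auto.
    intros b Hb. apply in_map_pair in Hb. destruct Hb as [b0 [Hi [_ E]]]. rewrite E.
    rewrite Forall_forall in IH. apply IH; auto.
  - apply nd_bra. apply nd_bra in N. destruct N as [N F]. rewrite blabel_map. split; auto.
    intros b Hb. apply in_map_pair in Hb. destruct Hb as [b0 [Hi [_ E]]]. rewrite E.
    rewrite Forall_forall in IH. apply IH; auto.
  - simpl in *. auto.
  - destruct (c <=? n); exact I.
  - exact I.
Qed.

Lemma nd_subst : forall X k U, nd U -> nd X -> nd (tsubst k U X).
Proof.
  intro X; induction X as [bs IH|bs IH|X IH|n|] using stype_ind'; intros k U NU N; simpl tsubst.
  - apply nd_sel. apply nd_sel in N. destruct N as [N F]. rewrite blabel_map. split; auto.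
    intros b Hb. apply in_map_pair in Hb. destruct Hb as [b0 [Hi [_ E]]]. rewrite E.
    rewrite Forall_forall in IH. apply IH; auto.
  - apply nd_bra. apply nd_bra in N. destruct N as [N F]. rewrite blabel_map. split; auto.
    intros b Hb. apply in_map_pair in Hb. destruct Hb as [b0 [Hi [_ E]]]. rewrite E.
    rewrite Forall_forall in IH. apply IH; auto.
  - simpl in *. apply IH; auto. apply nd_lift; auto.
  - destruct (n =? k); [auto|]. destruct (k <? n); exact I.
  - exact I.
Qed.

Lemma nodup_in {X Y : Type} : forall (bs : list (label * X * Y)) l x y x' y',
  NoDup (map blabel bs) -> In (l, x, y) bs -> In (l, x', y') bs -> x = x' /\ y = y'.
Proof.
  induction bs as [|b r IH]; intros l x y x' y' N H1 H2; simpl in *; [contradiction|].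
  inversion N as [|? ? Nn Nr]; subst.
  destruct H1 as [E1|H1]; destruct H2 as [E2|H2]; subst.
  - inversion E2; auto.
  - exfalso. apply Nn. unfold blabel at 1. simpl. apply (in_map blabel) in H2. exact H2.
  - exfalso. apply Nn. unfold blabel at 1. simpl. apply (in_map blabel) in H1. exact H1.
  - eauto.
Qed.

Lemma synth_recvP : forall T l v M', mtrans (synth T) (AIn l v) M' ->
  exists bs, T = TSel bs /\
   ((exists B X, In (l, B, X) bs /\ M' = MIf (AIsVal B (EVal v)) (MSendE l (EVal v) (synth X)) MNoP)
    \/ (~ In l (map blabel bs) /\ M' = MNoP)).
Proof.
  intros T l v M' H. destruct T as [bs|bs|X|n|]; simpl in H; inversion H; subst.
  - exists bs. split; auto. left.
    match goal with Hi : In _ (map _ _) |- _ => apply in_map_iff in Hi; destruct Hi as [[[l0 B0] X0] [E Hi]] end.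
    inversion E; subst. exists B0, X0. split; auto. simpl. rewrite ?Nat.eqb_refl, mvsubst_synth. reflexivity.
  - exists bs. split; auto. right. split; auto.
    rewrite map_map in *. erewrite map_ext; [eassumption|]. intros [[l0 B0] X0]. reflexivity.
Qed.

Lemma synth_recvE : forall T l v M', mtrans (synth T) (AInE l v) M' ->
  exists bs, T = TBra bs /\
   ((exists B X, In (l, B, X) bs /\ M' = MIf (AIsVal B (EVal v)) (MSendP l (EVal v) (synth X)) MNoE)
    \/ M' = MNoE).
Proof.
  intros T l v M' H. destruct T as [bs|bs|X|n|]; simpl in H; inversion H; subst.
  - exists bs. split; auto. left.
    match goal with Hi : In _ (map _ _) |- _ => apply in_map_iff in Hi; destruct Hi as [[[l0 B0] X0] [E Hi]] end.
    inversion E; subst. exists B0, X0. split; auto. simpl. rewrite ?Nat.eqb_refl, mvsubst_synth. reflexivity.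
  - exists bs. split; auto.
Qed.

Lemma synth_tau : forall T M', mtrans (synth T) ATau M' ->
  exists X, T = TRec X /\ M' = synth (tsubst 0 (TRec X) X).
Proof.
  intros T M' H. destruct T as [bs|bs|X|n|]; simpl in H; inversion H; subst.
  exists X. split; auto. rewrite synth_subst. reflexivity.
Qed.

Lemma synth_out : forall T l v M', mtrans (synth T) (AOut l v) M' -> False.
Proof. intros T l v M' H. destruct T; simpl in H; inversion H. Qed.
Lemma synth_outE : forall T l v M', mtrans (synth T) (AOutE l v) M' -> False.
Proof. intros T l v M' H. destruct T; simpl in H; inversion H. Qed.

Inductive Inv : proc * mon -> Prop :=
| I1 : forall P T, typed [] venv_empty P T -> nd T -> Inv (P, synth T)
| I2 : forall P T l v B, typed [] venv_empty P T -> nd T -> has_btype v B = true ->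
    Inv (P, MIf (AIsVal B (EVal v)) (MSendE l (EVal v) (synth T)) MNoP)
| I3 : forall P T l v, typed [] venv_empty P T -> nd T -> Inv (P, MSendE l (EVal v) (synth T))
| I4 : forall P U tbs l B T v, typed [] venv_empty P U -> teq U (TBra tbs) -> In (l, B, T) tbs -> nd T ->
    Inv (P, MIf (AIsVal B (EVal v)) (MSendP l (EVal v) (synth T)) MNoE)
| I5 : forall P U tbs l B T v, typed [] venv_empty P U -> teq U (TBra tbs) -> In (l, B, T) tbs -> nd T ->
    has_btype v B = true -> Inv (P, MSendP l (EVal v) (synth T))
| I6 : forall P, Inv (P, MNoE).

Lemma step_inv : forall c a c', strans c a c' -> Inv c -> Inv c'.
Proof.
  intros c a c' Hs HI.
  destruct Hs as [P P' M M' l v Hp Hm | P P' M M' l v Hp Hm | P M M' l v Hm | P M M' l v Hm | P P' M Hp | P M M' Hm].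
  - inversion HI; subst; try (inversion Hm; fail).
    destruct (synth_recvP _ _ _ _ Hm) as [bs [ET Hc]]. subst T.
    inversion Hp; subst.
    destruct (inv_send _ _ _ _ H1 _ _ _ eq_refl) as (tbs & B & T' & Hi & Hv & Ht & Hq).
    simpl in Hv. apply teq_sel_lmatch in Hq. destruct (Hq _ _ _ Hi) as [X' [Hi' tX]].
    apply nd_sel in H2. destruct H2 as [N F].
    destruct Hc as [(B0 & X & Hi0 & EM) | [Hn EM]]; subst M'.
    + destruct (nodup_in _ _ _ _ _ _ N Hi' Hi0) as [<- <-].
      apply I2; auto. eapply tEq; eauto. apply (F (l, B, X')); auto.
    + exfalso. apply Hn. apply (in_map blabel) in Hi'. exact Hi'.
  - inversion HI; subst; try (inversion Hm; fail).
    + exfalso. eapply synth_out; eauto.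
    + inversion Hm; subst. inversion Hp; subst.
      destruct (inv_branch _ _ _ _ H1 _ eq_refl) as (tbs' & N & Hb & Hq).
      assert (Hq' : teq (TBra tbs) (TBra tbs')) by (apply teq_sym; eapply teq_trans; eauto).
      apply teq_bra_lmatch in Hq'. destruct (Hq' _ _ _ H3) as [X' [Hi' tX]].
      destruct (Hb _ _ _ Hi') as (x' & P0' & Hin' & Ht').
      match goal with Hin : In (l, ?x, ?P0) bs |- _ =>
        destruct (nodup_in _ _ _ _ _ _ N Hin Hin') as [<- <-] end.
      apply I1; auto. eapply tEq; [|apply teq_sym; exact tX].
      eapply typed_vsub; eauto.
  - inversion HI; subst; try (inversion Hm; fail).
    + exfalso. eapply synth_outE; eauto.
    + inversion Hm; subst. apply I1; auto.
  - inversion HI; subst; try (inversion Hm; fail).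
    destruct (synth_recvE _ _ _ _ Hm) as [bs [ET Hc]]. subst T.
    destruct Hc as [(B0 & X & Hi0 & EM) | EM]; subst M'.
    + apply nd_bra in H2. destruct H2 as [N F].
      eapply I4; eauto. apply teq_refl. apply (F (l, B0, X)); auto.
    + apply I6.
  - inversion HI; subst.
    + apply I1; auto. eapply sr_tau; eauto.
    + apply I2; auto. eapply sr_tau; eauto.
    + apply I3; auto. eapply sr_tau; eauto.
    + eapply I4; eauto. eapply sr_tau; eauto.
    + eapply I5; eauto. eapply sr_tau; eauto.
    + apply I6.
  - inversion HI; subst; try (inversion Hm; fail).
    + destruct (synth_tau _ _ Hm) as [X [ET EM]]. subst. apply I1.
      * eapply tEq; eauto. apply teq_unfold.
      * apply nd_subst; auto.
    + inversion Hm; subst.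
      * apply I3; auto.
      * simpl in *. congruence.
    + inversion Hm; subst.
      * simpl in *. eapply I5; eauto. congruence.
      * apply I6.
Qed.

Lemma wtrans_inv : forall c t c', wtrans c t c' -> Inv c -> Inv c'.
Proof. induction 1; intros HI; eauto using step_inv. Qed.

Lemma inv_noP : forall P, Inv (P, MNoP) -> False.
Proof. intros P H. inversion H; subst. destruct T; simpl in *; discriminate. Qed.

Theorem mainTheorem1 (S : stype) (P : proc) :
  wf_stype S -> pguarded P ->
  (exists (t : list act) (P' : proc), wtrans (P, synth S) t (P', MNoP)) ->
  ~ typed nil venv_empty P S.
Proof.
  intros W _ [t [P' Hw]] Ht.
  apply (inv_noP P'). eapply wtrans_inv; [exact Hw|]. apply I1; auto. apply wf_nd; auto.
Qed.
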